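(* Let $q:\chi\to[0,\infty)$ be a risk metric. A risk-sharing rule $\boldsymbol{C}$ on $\chi^n$ is the $q$-proportional RS rule if and only if it satisfies the reshuffling property and has source-anonymous contribution-over-$q$ ratios.
   Context: Fix a probability space $(\Omega,\mathcal{F},\mathbb{P})$ and an integer $n\ge 1$. Let $\chi$ be a convex cone of non-negative random variables on this space (closed under addition and under multiplication by positive scalars) with $0\in\chi$. All equalities between random variables are understood almost surely. A pool is a vector $\boldsymbol{X}=(X_1,\ldots,X_n)\in\chi^n$, with aggregate loss $S_{\boldsymbol{X}}=\sum_{i=1}^n X_i$. A risk-sharing (RS) rule is a mapping $\boldsymbol{C}$ assigning to every pool $\boldsymbol{X}\in\chi^n$ a vector $\boldsymbol{C}[\boldsymbol{X}]=(C_1[\boldsymbol{X}],\ldots,C_n[\boldsymbol{X}])$ of real-valued random variables satisfying $\sum_{i=1}^n C_i[\boldsymbol{X}]=S_{\boldsymbol{X}}$. A risk metric is any function $q:\chi\to[0,\infty)$. The $q$-proportional RS rule is specified only on pools with $q[X_j]>0$ for at least one $j$, where it is given by $C_i[\boldsymbol{X}]=\frac{q[X_i]}{\sum_{k=1}^n q[X_k]}S_{\boldsymbol{X}}$ for $i=1,\ldots,n$; a rule ''is the $q$-proportional RS rule'' if its contributions equal these on every such pool (its values on pools with all $q[X_j]=0$ are left unspecified). For a permutation $\pi$ of $\{1,\ldots,n\}$, $\boldsymbol{X}^\pi=(X_{\pi(1)},\ldots,X_{\pi(n)})$. Reshuffling property: $C_i[\boldsymbol{X}^\pi]=C_{\pi(i)}[\boldsymbol{X}]$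 for all pools $\boldsymbol{X}$, permutations $\pi$ and indices $i$. Source-anonymous contribution-over-$q$ ratios: for every pool $\boldsymbol{X}$, every permutation $\pi$ and every $i$ with $q[X_i]>0$, $C_i[\boldsymbol{X}^\pi]=\frac{q[X_{\pi(i)}]}{q[X_i]}C_i[\boldsymbol{X}]$. *)

(* Defs.v *)
From HB Require Import structures.
From mathcomp Require Import all_boot all_order all_fingroup all_algebra.
From mathcomp Require Import all_classical all_reals all_analysis.
Set Implicit Arguments. Unset Strict Implicit. Unset Printing Implicit Defensive.
Import Order.TTheory GRing.Theory Num.Theory.
Local Open Scope classical_set_scope.
Local Open Scope ring_scope.

Section RiskSharing.
Context {d : measure_display} {T : measurableType d} {R : realType}.
Context (P : probability T R) (n : nat).

Definition aeeq (f g : T -> R) : Prop := {ae P, forall t, f t = g t}.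

Definition is_nonneg_cone (chi : set (T -> R)) : Prop :=
  [/\ (forall X, chi X -> measurable_fun setT X /\ (forall t, 0 <= X t)),
      chi (fun _ => 0),
      (forall X Y, chi X -> chi Y -> chi (fun t => X t + Y t)) &
      (forall (c : R) X, 0 < c -> chi X -> chi (fun t => c * X t))].

Definition pool (chi : set (T -> R)) (X : 'I_n -> T -> R) : Prop :=
  forall i, chi (X i).

Definition aggr (X : 'I_n -> T -> R) : T -> R := fun t => \sum_(i < n) X i t.

Definition perm_pool (X : 'I_n -> T -> R) (pi : {perm 'I_n}) : 'I_n -> T -> R :=
  fun i => X (pi i).

Definition is_RS_rule (chi : set (T -> R))
    (C : ('I_n -> T -> R) -> 'I_n -> T -> R) : Prop :=
  forall X, pool chi X ->
    (forall i, measurable_fun setT (C X i)) /\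
    aeeq (fun t => \sum_(i < n) C X i t) (aggr X).

Definition is_risk_metric (chi : set (T -> R)) (q : (T -> R) -> R) : Prop :=
  forall X, chi X -> 0 <= q X.

Definition qpos (q : (T -> R) -> R) (X : 'I_n -> T -> R) : Prop :=
  exists j, 0 < q (X j).

Definition is_q_proportional (chi : set (T -> R)) (q : (T -> R) -> R)
    (C : ('I_n -> T -> R) -> 'I_n -> T -> R) : Prop :=
  forall X, pool chi X -> qpos q X -> forall i,
    aeeq (C X i) (fun t => q (X i) / (\sum_(k < n) q (X k)) * aggr X t).

(* reshuffling property, on the pools where the q-proportional rule is
   specified *)
Definition reshuffling_qpos (chi : set (T -> R)) (q : (T -> R) -> R)
    (C : ('I_n -> T -> R) -> 'I_n -> T -> R) : Prop :=
  forall X, pool chi X -> qpos q X -> forall (pi : {perm 'I_n}) i,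
    aeeq (C (perm_pool X pi) i) (C X (pi i)).

Definition source_anonymous_ratios (chi : set (T -> R)) (q : (T -> R) -> R)
    (C : ('I_n -> T -> R) -> 'I_n -> T -> R) : Prop :=
  forall X, pool chi X -> forall (pi : {perm 'I_n}) i, 0 < q (X i) ->
    aeeq (C (perm_pool X pi) i) (fun t => q (X (pi i)) / q (X i) * C X i t).

End RiskSharing.

(* Main.v *)
Require Import Defs.
From HB Require Import structures.
From mathcomp Require Import all_boot all_order all_fingroup all_algebra.
From mathcomp Require Import all_classical all_reals all_analysis.
From mathcomp Require Import ring lra.
Import Order.TTheory GRing.Theory Num.Theory.
Local Open Scope classical_set_scope.
Local Open Scope ring_scope.

Theorem theorem3 (d : measure_display) (T : measurableType d) (R : realType)
    (P : probability T R) (n : nat) (hn : (0 < n)%N)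
    (chi : set (T -> R)) (hchi : is_nonneg_cone chi)
    (q : (T -> R) -> R) (hq : is_risk_metric chi q)
    (C : ('I_n -> T -> R) -> 'I_n -> T -> R) (hC : is_RS_rule P chi C) :
  is_q_proportional P chi q C <->
  (reshuffling_qpos P chi q C /\ source_anonymous_ratios P chi q C).
Proof.
have FF : Filter (almost_everywhere P) by exact: ae_filter_ringOfSetsType.
have sumP : forall (X : 'I_n -> T -> R) (pi : {perm 'I_n}),
    \sum_(k < n) q (perm_pool X pi k) = \sum_(k < n) q (X k).
  by move=> X pi; rewrite [RHS](reindex_inj (@perm_inj _ pi)).
have aggrP : forall (X : 'I_n -> T -> R) (pi : {perm 'I_n}) t,
    aggr (perm_pool X pi) t = aggr X t.
  by move=> X pi t; rewrite /aggr [RHS](reindex_inj (@perm_inj _ pi)).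
have poolP : forall (X : 'I_n -> T -> R) (pi : {perm 'I_n}), pool chi X -> pool chi (perm_pool X pi).
  by move=> X pi pX i; exact: (pX (pi i)).
split.
- move=> Hprop; split.
  + move=> X pX qX pi i.
    have qX' : qpos q (perm_pool X pi).
      by case: qX => j hj; exists (pi^-1 j)%g; rewrite /perm_pool permKV.
    apply: filterS2 (Hprop _ (poolP X pi pX) qX' i) (Hprop X pX qX (pi i)).
    by move=> t -> ->; rewrite sumP aggrP.
  + move=> X pX pi i hqi.
    have qX : qpos q X by exists i.
    have qX' : qpos q (perm_pool X pi).
      by exists (pi^-1 i)%g; rewrite /perm_pool permKV.
    apply: filterS2 (Hprop _ (poolP X pi pX) qX' i) (Hprop X pX qX i).
    move=> t -> ->; rewrite sumP aggrP /perm_pool.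
    have hs : 0 < \sum_(k < n) q (X k).
      rewrite (bigD1 i) //=.
      have : 0 <= \sum_(k < n | k != i) q (X k) by apply: sumr_ge0 => k _; apply: hq.
      lra.
    field; apply/andP; split; rewrite gt_eqF //.
- move=> [Hres Hsa] X pX [j hj] i.
  have qX : qpos q X by exists j.
  have hs : 0 < \sum_(k < n) q (X k).
    rewrite (bigD1 j) //=.
    have : 0 <= \sum_(k < n | k != j) q (X k) by apply: sumr_ge0 => k _; apply: hq.
    lra.
  have Hk : forall k, {ae P, forall t, C X k t = q (X k) / q (X j) * C X j t}.
    move=> k.
    apply: filterS2 (Hsa X pX (tperm k j) j hj) (Hres X pX qX (tperm k j) j).
    by move=> t; rewrite /perm_pool tpermR => -> ->.
  have Hall := filter_forall FF Hk.
  apply: filterS2 Hall (hC X pX).2.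
  move=> t /= Hkt St; rewrite Hkt -St (eq_bigr _ (fun k _ => Hkt k)).
  set s := \sum_(k < n) q (X k).
  set b := q (X j).
  have hs0 : s != 0 by rewrite gt_eqF.
  have -> : \sum_(k < n) (q (X k) / b * C X j t) = s * (b^-1 * C X j t).
    by rewrite /s big_distrl /=; apply: eq_bigr => k _; rewrite mulrA.
  by rewrite mulrA divfK // mulrA.
Qed.
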